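(* With $\mathcal{F}$ the infinite rooted tree in which every vertex has $p$ children ($p\ge2$ an integer), for any integral weight functions $a,b$ on $\mathcal{F}$ with nonnegative integer weights $\omega_a,\omega_b$, $$\langle a,b\rangle\ \ge\ \sum_{i=0}^{\infty}p^i\,\widehat\gamma_i(\omega_a)\widehat\gamma_i(\omega_b)\ \ge\ \sum_{i=0}^{\infty}p^i\,\widetilde\gamma_i(\omega_a)\widetilde\gamma_i(\omega_b).$$
   Context: An integral weight function with weight $\omega$ is a map $a:V(\mathcal{F})\to\mathbb{Z}_{\ge0}$ such that every infinite path from the root has $\sum_{v\in T}a(v)\ge\omega$ and $a(v)\ge\sum_{u\text{ child of }v}a(u)$ for every vertex $v$; $\langle a,b\rangle=\sum_v a(v)b(v)$. An integral (resp. real) resolution of $\omega$ is a sequence $(\gamma_i)_{i\ge0}$ with values in $\mathbb{Z}_{\ge0}$ (resp. in $\{0\}\cup[1,\infty)$) such that $\gamma_i\ge p\gamma_{i+1}$ for all $i$ and $\sum_i\gamma_i=\omega$. $\widehat\gamma(\omega)$ (resp. $\widetilde\gamma(\omega)$) denotes the lexicographically smallest integral (resp. real) resolution of $\omega$. *)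

(* Defs.v *)
From HB Require Import structures.
From mathcomp Require Import all_boot all_order all_algebra.
From mathcomp Require Import all_classical all_reals.
From mathcomp Require Import ereal esum.
Set Implicit Arguments. Unset Strict Implicit. Unset Printing Implicit Defensive.
Import Order.TTheory GRing.Theory Num.Theory.
Local Open Scope classical_set_scope.
Local Open Scope ring_scope.

(* The p-ary rooted tree F: vertices are finite words over 'I_p, the root is
   the empty word, and the children of v are the words rcons v j, j : 'I_p. *)
Definition vertex (p : nat) := seq 'I_p.

Definition path_vertex (p : nat) (f : nat -> 'I_p) (n : nat) : vertex p :=
  mkseq f n.

Definition integral_weight_function (R : realType) (p : nat)
    (a : vertex p -> nat) (w : nat) : Prop :=
  (forall f : nat -> 'I_p,
      ((w%:R : R)%:E <= \esum_(n in [set: nat]) ((a (path_vertex f n))%:R : R)%:E)%E)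
  /\ (forall v : vertex p, (\sum_(j < p) a (rcons v j) <= a v)%N).

Definition pairing (R : realType) (p : nat) (a b : vertex p -> nat) : \bar R :=
  \esum_(v in [set: vertex p]) (((a v * b v)%N)%:R : R)%:E.

Definition lex_lt {d : Order.disp_t} {T : porderType d} (g h : nat -> T) : Prop :=
  exists k, (forall i, (i < k)%N -> g i = h i) /\ (g k < h k)%O.
Definition lex_le {d : Order.disp_t} {T : porderType d} (g h : nat -> T) : Prop :=
  (forall i, g i = h i) \/ lex_lt g h.

Definition integral_resolution (R : realType) (p w : nat) (g : nat -> nat) : Prop :=
  (forall i, (p * g i.+1 <= g i)%N) /\
  (\esum_(i in [set: nat]) ((g i)%:R : R)%:E = ((w%:R : R))%:E)%E.

Definition real_resolution (R : realType) (p w : nat) (g : nat -> R) : Prop :=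
  (forall i, g i = 0 \/ 1 <= g i) /\
  (forall i, p%:R * g i.+1 <= g i) /\
  (\esum_(i in [set: nat]) (g i)%:E = ((w%:R : R))%:E)%E.

Definition is_hat_gamma (R : realType) (p w : nat) (g : nat -> nat) : Prop :=
  integral_resolution R p w g /\
  forall h, integral_resolution R p w h -> lex_le g h.

Definition is_tilde_gamma (R : realType) (p w : nat) (g : nat -> R) : Prop :=
  real_resolution p w g /\
  forall h, real_resolution p w h -> lex_le g h.

(* Main.v *)
Require Import Defs.
From HB Require Import structures.
From mathcomp Require Import all_boot all_order all_algebra.
From mathcomp Require Import all_classical all_reals.
From mathcomp Require Import ereal esum.
From mathcomp Require Import sequences normedtype.
From mathcomp Require Import zify ring lra.
Import Order.TTheory GRing.Theory Num.Theory.
Set Implicit Arguments. Unset Strict Implicit. Unset Printing Implicit Defensive.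
Local Open Scope classical_set_scope.
Local Open Scope ring_scope.

Section Comb.
Variable p : nat.
Hypothesis hp : (1 < p)%N.
Local Open Scope nat_scope.

Fixpoint Sf (n a : nat) : nat := if n is n'.+1 then a + Sf n' (a %/ p) else 0.
Definition S a := Sf a.+1 a.

Lemma Sf0 n : Sf n 0 = 0.
Proof. by elim: n => //= n IH; rewrite div0n IH. Qed.

Lemma Sf_stable n m a : a < n -> a < m -> Sf n a = Sf m a.
Proof.
elim: n m a => [|n IH] [|m] a //= an am.
case: a an am => [|a] an am; first by rewrite div0n !Sf0.
congr (_ + _); apply: IH.
- exact: leq_trans (ltn_Pdiv hp (ltn0Sn a)) an.
- exact: leq_trans (ltn_Pdiv hp (ltn0Sn a)) am.
Qed.

Lemma S_rec a : S a = a + S (a %/ p).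
Proof.
rewrite /S /=; congr (_ + _).
case: a => [|a]; first by rewrite div0n !Sf0.
apply: (@Sf_stable a.+1 (a.+1 %/ p).+1); [exact: ltn_Pdiv | exact: ltnSn].
Qed.

Lemma S0 : S 0 = 0. Proof. by []. Qed.

Lemma S_ge a : a <= S a.
Proof. by rewrite S_rec leq_addr. Qed.

Lemma Sf_mono n a b : a <= b -> Sf n a <= Sf n b.
Proof.
elim: n a b => //= n IH a b ab; apply: leq_add => //; apply: IH.
exact: leq_div2r.
Qed.

Lemma S_mono a b : a <= b -> S a <= S b.
Proof.
move=> ab; rewrite /S (@Sf_stable a.+1 b.+1) //; first exact: Sf_mono.

Qed.

Lemma S_succ a : (S a).+1 <= S a.+1.
Proof.
rewrite (S_rec a) (S_rec a.+1) addSn ltnS leq_add2l; apply: S_mono.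
by apply: leq_div2r.
Qed.

Lemma S_sum (h : nat -> nat) : (forall k, p * h k.+1 <= h k) ->
  forall N, \sum_(k < N) h k <= S (h 0).
Proof.
move=> hh N; elim: N h hh => [|N IH] h hh; first by rewrite big_ord0.
rewrite big_ord_recl S_rec leq_add2l.
apply: (leq_trans (IH (fun k => h k.+1) _)); first by move=> k; exact: hh.
apply: S_mono; rewrite leq_divRL; last by apply: ltnW.
by rewrite mulnC.
Qed.

Lemma A_ex x : exists a, x <= S a.
Proof. by exists x; rewrite /S /= leq_addr. Qed.

Definition A x := ex_minn (A_ex x).

Lemma A_spec x : x <= S (A x).
Proof. by rewrite /A; case: ex_minnP. Qed.

Lemma A_min x a : x <= S a -> A x <= a.
Proof. by rewrite /A; case: ex_minnP => m _ H /H. Qed.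

Lemma A_le x : A x <= x.
Proof. exact/A_min/S_ge. Qed.

Lemma A0 : A 0 = 0.
Proof. by apply/eqP; rewrite -leqn0 A_le. Qed.

Lemma A_mono x y : x <= y -> A x <= A y.
Proof. by move=> xy; apply: A_min; apply: leq_trans xy (A_spec y). Qed.

Lemma A_succ x : A x.+1 <= (A x).+1.
Proof. by apply: A_min; apply: leq_trans (S_succ _); rewrite ltnS A_spec. Qed.

Lemma A_pos x : 0 < x -> 0 < A x.
Proof.
move=> x0; rewrite lt0n; apply/negP => /eqP A0'.
by have := A_spec x; rewrite A0' S0 leqNgt x0.
Qed.

Lemma A_tail x : p * A (x - A x) <= A x.
Proof.
have : A (x - A x) <= A x %/ p.
  apply: A_min; rewrite leq_subLR -S_rec; exact: A_spec.
by rewrite leq_divRL ?(ltnW hp) // mulnC.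
Qed.

Fixpoint hat (i x : nat) : nat := if i is i'.+1 then hat i' (x - A x) else A x.

Lemma hat_res i x : p * hat i.+1 x <= hat i x.
Proof. by elim: i x => [|i IH] x /=; [exact: A_tail | exact: IH]. Qed.

Lemma hat_zero i x : x <= i -> hat i x = 0.
Proof.
elim: i x => [|i IH] x /=; first by rewrite leqn0 => /eqP ->; rewrite A0.
move=> xi; apply: IH; case: x xi => [|x] xi; first by rewrite A0.
by rewrite leq_subLR; apply: leq_trans xi _; rewrite -addn1 addnC leq_add2r A_pos.
Qed.

Lemma hat_sum x N : x <= N -> \sum_(i < N) hat i x = x.
Proof.
elim: N x => [|N IH] x; first by rewrite leqn0 big_ord0 => /eqP ->.
move=> xN; rewrite big_ord_recl /= IH; first by rewrite subnKC // A_le.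
case: x xN => [|x] xN; first by rewrite A0.
by rewrite leq_subLR; apply: leq_trans xN _; rewrite -addn1 addnC leq_add2r A_pos.
Qed.

Fixpoint Fn (n x y : nat) : nat :=
  if n is n'.+1 then A x * A y + p * Fn n' (x - A x) (y - A y) else A x * A y.

Lemma Fn_sym n x y : Fn n x y = Fn n y x.
Proof. by elim: n x y => [|n IH] x y /=; rewrite mulnC // IH. Qed.

Lemma Fn_sum n x y : Fn n x y = \sum_(i < n.+1) p ^ i * hat i x * hat i y.
Proof.
elim: n x y => [|n IH] x y /=; first by rewrite big_ord_recl big_ord0 expn0 mul1n addn0.
rewrite big_ord_recl /= expn0 mul1n IH big_distrr /=; congr (_ + _).
by apply: eq_bigr => i _; rewrite expnS !mulnA.
Qed.

Lemma Fn_M n x y : Fn n x.+1 y <= Fn n x y + A y.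
Proof.
elim: n x y => [|n IH] x y /=.
  by rewrite addnC -mulSn leq_mul2r A_succ orbT.
have := A_succ x; rewrite leq_eqVlt ltnS => /orP[/eqP ->|].
  by rewrite subSS mulSn; lia.
move=> h; have e : A x.+1 = A x by apply/eqP; rewrite eqn_leq h A_mono.
rewrite e subSn ?A_le // -addnA leq_add2l.
apply: (leq_trans (leq_mul (leqnn p) (IH _ _))).
by rewrite mulnDr leq_add2l A_tail.
Qed.

Lemma Fn_Md n x d y : Fn n (x + d) y <= Fn n x y + d * A y.
Proof.
elim: d => [|d IH]; first by rewrite addn0 mul0n addn0.
rewrite addnS; apply: (leq_trans (Fn_M _ _ _)).
by rewrite mulSn; lia.
Qed.

Lemma Fn_L n x y al be : A x <= al -> A y <= be ->
  Fn n.+1 x y <= al * be + p * Fn n (x - al) (y - be).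
Proof.
move=> hal hbe /=.
set z := x - al; set w := y - be.
have zx : z <= x - A x by rewrite leq_sub2l.
have wy : w <= y - A y by rewrite leq_sub2l.
set d := x - A x - z; set e := y - A y - w.
have ex : x - A x = z + d by rewrite /d subnKC.
have ey : y - A y = w + e by rewrite /e subnKC.
have dle : d <= al - A x by rewrite /d /z; lia.
have ele : e <= be - A y by rewrite /e /w; lia.
have H1 : Fn n (x - A x) (y - A y) <= Fn n z w + e * A z + d * A (y - A y).
  rewrite ex ey; have T1 := Fn_Md n z d (w + e); have T2 := Fn_Md n w e z.
  rewrite Fn_sym (Fn_sym n w z) in T2; lia.
have HAz : p * A z <= A x.
  by apply: leq_trans (A_tail x); rewrite leq_mul2l A_mono ?orbT.
have H1' : p * Fn n (x - A x) (y - A y) <=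
    p * Fn n z w + p * (e * A z) + p * (d * A (y - A y)).
  by rewrite -!mulnDr leq_mul2l H1 orbT.
have Hp1 : p * (e * A z) <= (be - A y) * A x.
  by rewrite mulnCA (leq_trans (leq_mul (leqnn e) HAz)) // leq_mul2r ele orbT.
have Hp2 : p * (d * A (y - A y)) <= (al - A x) * A y.
  by rewrite mulnCA (leq_trans (leq_mul (leqnn d) (A_tail y))) // leq_mul2r dle orbT.
have Eab : al * be = A x * A y + (be - A y) * A x + (al - A x) * A y + (al - A x) * (be - A y).
  rewrite -{1}(subnKC hal) -{1}(subnKC hbe) mulnDl !mulnDr.
  rewrite [A x * (_ - _)]mulnC; lia.
lia.
Qed.
End Comb.

Section Tree.
Variable p : nat.
Hypothesis hp : (1 < p)%N.
Local Open Scope nat_scope.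

Definition wf (a : vertex p -> nat) (x : nat) :=
  (forall v, \sum_(j < p) a (rcons v j) <= a v) /\
  (forall f : nat -> 'I_p, exists N, x <= \sum_(k < N) a (path_vertex f k)).

Lemma wf_root a x : wf a x -> A p x <= a [::].
Proof.
move=> [hpar hpath].
pose j0 : 'I_p := Ordinal (ltnW hp).
pose mc (v : vertex p) := [arg min_(j < j0) a (rcons v j)].
pose fix gv n := if n is n'.+1 then rcons (gv n') (mc (gv n')) else [::].
pose f n := mc (gv n).
have pv n : path_vertex f n = gv n.
  by elim: n => [|n IH] //; rewrite /path_vertex mkseqS -/(path_vertex f n) IH.
have dec k : p * a (gv k.+1) <= a (gv k).
  apply: leq_trans (hpar (gv k)); rewrite /= /mc.
  case: arg_minnP => // j _ Hj.
  rewrite -[X in X * _](card_ord p) -sum_nat_const.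
  by apply: leq_sum => i _; exact: Hj.
have [N HN] := hpath f.
apply: A_min; apply: leq_trans HN _.
under eq_bigr do rewrite pv.
exact: (@S_sum p hp (fun k => a (gv k)) dec N).
Qed.

Lemma pv_cons (j : 'I_p) (f' : nat -> 'I_p) k :
  path_vertex (fun n => if n is n'.+1 then f' n' else j) k.+1 = j :: path_vertex f' k.
Proof.
rewrite /path_vertex /mkseq /=; congr (_ :: _).
have -> : iota 1 k = map (addn 1) (iota 0 k) by rewrite -iotaDl.
by rewrite -map_comp; apply: eq_map => i.
Qed.

Lemma wf_sub a x (j : 'I_p) : wf a x -> wf (fun u => a (j :: u)) (x - a [::]).
Proof.
move=> [hpar hpath]; split; first by move=> v; exact: hpar.
move=> f'; have [[|N] HN] := hpath (fun n => if n is n'.+1 then f' n' else j).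
  by exists 0; move: HN; rewrite big_ord0 leqn0 => /eqP ->.
exists N; rewrite leq_subLR; apply: leq_trans HN _.
rewrite big_ord_recl leq_add2l; apply: eq_leq; apply: eq_bigr => i _.
by rewrite pv_cons.
Qed.

Fixpoint Lv n : seq (vertex p) :=
  if n is n'.+1 then [::] :: [seq j :: u | j <- enum 'I_p, u <- Lv n'] else [:: [::]].

Lemma Lv_uniq n : uniq (Lv n).
Proof.
elim: n => [|n IH] //=; apply/andP; split.
  by apply/negP => /allpairsP [[j u] [_ _ /=]].
apply: allpairs_uniq => //; first exact: enum_uniq.
by move=> [j u] [j' u'] _ _ /= [-> ->].
Qed.

Lemma tree_bound n : forall a b x y, wf a x -> wf b y ->
  Fn p n x y <= \sum_(v <- Lv n) a v * b v.
Proof.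
elim: n => [|n IH] a b x y wa wb.
  by rewrite /= big_seq1 leq_mul // wf_root.
rewrite /= big_cons big_allpairs_dep.
apply: leq_trans (Fn_L hp n (wf_root wa) (wf_root wb)) _.
rewrite leq_add2l.
have -> : p * Fn p n (x - a [::]) (y - b [::]) =
    \sum_(j <- enum 'I_p) Fn p n (x - a [::]) (y - b [::]).
  by rewrite big_enum /= sum_nat_const card_ord.
apply: leq_sum => j _; exact: IH (wf_sub j wa) (wf_sub j wb).
Qed.
End Tree.

Section Esum.
Variable R : realType.

Lemma esum_fin (f : nat -> R) N : (forall i, 0 <= f i) -> (forall i, (N <= i)%N -> f i = 0) ->
  (\esum_(i in [set: nat]) (f i)%:E = (\sum_(i < N) f i)%:E)%E.
Proof.
move=> f0 fN; rewrite -nneseries_esumT; last by move=> n; rewrite lee_fin.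
rewrite (nneseries_split 0 N); last by move=> k _; rewrite lee_fin.
rewrite eseries0 ?adde0; last by move=> i; rewrite add0n => /fN ->.
by rewrite add0n big_mkord sumEFin.
Qed.

Lemma esum_partial (f : nat -> R) N : (forall i, 0 <= f i) ->
  ((\sum_(i < N) f i)%:E <= \esum_(i in [set: nat]) (f i)%:E)%E.
Proof.
move=> f0; rewrite -nneseries_esumT; last by move=> n; rewrite lee_fin.
rewrite -sumEFin -(big_mkord xpredT (fun i => (f i)%:E)).
by apply: nneseries_lim_ge => n _ _; rewrite lee_fin.
Qed.

Lemma esum_nat_ex (f : nat -> nat) (x : nat) :
  ((x%:R : R)%:E <= \esum_(i in [set: nat]) ((f i)%:R : R)%:E)%E ->
  exists N, (x <= \sum_(i < N) f i)%N.
Proof.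
move=> H; apply/not_existsP => hn.
have hlt N : (\sum_(i < N) f i < x)%N by rewrite ltnNge; apply/negP => /(hn N).
move: H; rewrite -nneseries_esumT; last by move=> n; rewrite lee_fin.
apply/negP; rewrite -ltNge.
apply: (@le_lt_trans _ _ ((x.-1)%:R : R)%:E); last first.
  rewrite lte_fin ltr_nat; have := hlt 0; rewrite big_ord0; lia.
apply: lime_le; first by apply: is_cvg_nneseries => n _ _; rewrite lee_fin.
apply: nearW => n; rewrite big_mkord sumEFin lee_fin -natr_sum ler_nat.
have x0 : (0 < x)%N by have := hlt 0; rewrite big_ord0.
by rewrite -ltnS prednK //; exact: hlt.
Qed.

Lemma esum_seq_ge (T : choiceType) (s : seq T) (g : T -> nat) : uniq s ->
  (((\sum_(v <- s) g v)%N%:R : R)%:E <= \esum_(v in [set: T]) ((g v)%:R : R)%:E)%E.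
Proof.
move=> us; apply: esum_ge; exists [set` s].
  by split; [exact: finite_seq | by []].
by rewrite -fsbig_seq // natr_sum sumEFin.
Qed.
End Esum.

Lemma big_trunc (T : Type) (idx : T) (op : Monoid.com_law idx) (F : nat -> T) n N :
  (n <= N)%N -> (forall i, (n <= i)%N -> F i = idx) ->
  \big[op/idx]_(i < N) F i = \big[op/idx]_(i < n) F i.
Proof.
move=> nN F0; rewrite -(subnKC nN) big_split_ord /=.
rewrite [X in op _ X]big1 ?Monoid.mulm1 // => i _; apply: F0; exact: leq_addr.
Qed.

Lemma lex_antisym (g h : nat -> nat) : lex_le g h -> lex_le h g -> forall i, g i = h i.
Proof.
move=> [//|[k [e1 l1]]] [e|[k' [e2 l2]]]; first by move=> i; rewrite e.
exfalso; move: l1 l2; rewrite /= !ltEnat /=.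
case: (ltngtP k k') => kk.
- by rewrite (e2 k) // ltnn.
- by rewrite (e1 k') // ltnn.
- by rewrite kk => a b; have := ltn_trans a b; rewrite ltnn.
Qed.

Lemma lex_le0 (R : realType) (g h : nat -> R) : lex_le g h -> g 0%N <= h 0%N.
Proof.
move=> [->//|[[|k] [e l]]]; first exact: ltW.
by rewrite e.
Qed.

Section Res.
Variable p : nat.
Hypothesis hp : (1 < p)%N.
Local Open Scope nat_scope.

Lemma res_pow (h : nat -> nat) : (forall k, p * h k.+1 <= h k) ->
  forall k, p ^ k * h k <= h 0.
Proof.
move=> hh; elim=> [|k IH]; first by rewrite expn0 mul1n.
by apply: leq_trans IH; rewrite expnS (mulnC p) -mulnA leq_mul2l hh orbT.
Qed.

Lemma res_supp (h : nat -> nat) : (forall k, p * h k.+1 <= h k) ->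
  forall k, h 0 <= k -> h k = 0.
Proof.
move=> hh k hk; apply/eqP; rewrite -leqn0 leqNgt; apply/negP => pos.
have H1 : p ^ k <= p ^ k * h k by rewrite leq_pmulr.
have := leq_trans (leq_trans H1 (res_pow hh k)) hk.
by rewrite leqNgt ltn_expl.
Qed.

Lemma ires_fin (R : realType) x h : integral_resolution R p x h ->
  forall N, h 0 <= N -> \sum_(k < N) h k = x.
Proof.
move=> [hh he] N hN.
rewrite (big_trunc _ hN); last first. by move=> i hi; rewrite (res_supp hh hi).
move: he; rewrite (@esum_fin R (fun i => (h i)%:R) (h 0)) //; last first.
  by move=> i hi; rewrite (res_supp hh hi).
by rewrite -natr_sum => /eqP; rewrite eqe eqr_nat => /eqP.
Qed.

Lemma hat_ires (R : realType) x : integral_resolution R p x (fun i => hat p i x).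
Proof.
split; first by move=> i; exact: hat_res.
rewrite (@esum_fin R (fun i => (hat p i x)%:R) x) //; last first.
  by move=> i hi; rewrite (hat_zero hp hi).
by rewrite -natr_sum hat_sum.
Qed.

Lemma hat_lexmin x : forall h, (forall k, p * h k.+1 <= h k) ->
  (forall N, h 0 <= N -> \sum_(k < N) h k = x) -> lex_le (fun i => hat p i x) h.
Proof.
elim/ltn_ind: x => x IH h hh hs.
have Ax : A p x <= h 0.
  apply: A_min; rewrite -(hs (h 0)) //; exact: S_sum.
case: x IH hs Ax => [|x] IH hs Ax.
  left => i; rewrite hat_zero //.
  have h00 : h 0 = 0.
    apply/eqP; rewrite -leqn0; have := hs (h 0).+1 (leqnSn _).
    by rewrite big_ord_recl => /eqP; rewrite addn_eq0 => /andP[/eqP -> _].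
  by rewrite res_supp // h00.
rewrite leq_eqVlt in Ax; case/orP: Ax => [/eqP Ax|Ax]; last first.
  by right; exists 0; split => // i; rewrite ltEnat.
pose h' k := h k.+1.
have hh' : forall k, p * h' k.+1 <= h' k by move=> k; exact: hh.
have hs' : forall N, h' 0 <= N -> \sum_(k < N) h' k = x.+1 - A p x.+1.
  move=> N hN; have := hs (maxn N.+1 (h 0)) (leq_maxr _ _).
  rewrite (big_trunc _ (leq_maxl _ _)); last first.
    case=> [|i] hi //; apply: (res_supp hh'); apply: leq_trans hN _; exact: hi.
  by rewrite big_ord_recl Ax => <-; rewrite addKn.
have lt : x.+1 - A p x.+1 < x.+1.
  by rewrite ltn_subrL A_pos.
case: (IH _ lt h' hh' hs') => [e|[k [e l]]].
  by left; case=> [|i] //=; rewrite e.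
right; exists k.+1; split => //.
case=> [|i] hi //=; exact: e.
Qed.

Lemma hat_is_hat (R : realType) x g : is_hat_gamma R p x g -> forall i, g i = hat p i x.
Proof.
move=> [gr gmin]; apply: lex_antisym; first exact: gmin (hat_ires R x).
apply: hat_lexmin; first exact: gr.1.
exact: ires_fin gr.
Qed.
End Res.

Lemma iwf_wf (R : realType) p (a : vertex p -> nat) w :
  integral_weight_function R a w -> wf a w.
Proof.
move=> [hpath hpar]; split => // f; exact: (esum_nat_ex (hpath f)).
Qed.

Lemma part1 (R : realType) (p : nat) (hp : (2 <= p)%N)
    (a b : vertex p -> nat) (wa wb : nat)
    (ha : integral_weight_function R a wa) (hb : integral_weight_function R b wb)
    (gha ghb : nat -> nat)
    (hgha : is_hat_gamma R p wa gha) (hghb : is_hat_gamma R p wb ghb) :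
  (\esum_(i in [set: nat]) ((((p ^ i) * gha i * ghb i)%N)%:R : R)%:E
     <= pairing R a b)%E.
Proof.
have ea := hat_is_hat hp hgha; have eb := hat_is_hat hp hghb.
set n := (wa + wb)%N.
rewrite (@esum_fin R (fun i => (((p ^ i) * gha i * ghb i)%N)%:R) n.+1) //; last first.
  move=> i hi; rewrite ea (hat_zero hp (_ : (wa <= i)%N)) ?muln0 ?mul0n //.
  exact: leq_trans (leq_trans (leq_addr wb wa) (leqnSn _)) hi.
rewrite -natr_sum.
apply: le_trans (esum_seq_ge R (fun v => (a v * b v)%N) (Lv_uniq p n)).
rewrite lee_fin ler_nat.
have -> : (\sum_(i < n.+1) p ^ i * gha i * ghb i)%N = Fn p n wa wb.
  by rewrite Fn_sum; apply: eq_bigr => i _; rewrite ea eb.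
have := tree_bound hp n (iwf_wf ha) (iwf_wf hb). by [].
Qed.

Section Cheb.
Variable R : realType.

Lemma cheb (n : nat) (w a b : nat -> R) : (forall i, 0 <= w i) ->
  (forall i j, 0 <= (a i - a j) * (b i - b j)) ->
  (\sum_(i < n) w i * a i) * (\sum_(i < n) w i * b i) <=
  (\sum_(i < n) w i) * (\sum_(i < n) w i * a i * b i).
Proof.
move=> w0 ab.
have D0 : 0 <= \sum_(i < n) \sum_(j < n) w i * w j * ((a i - a j) * (b i - b j)).
  apply: sumr_ge0 => i _; apply: sumr_ge0 => j _.
  by apply: mulr_ge0; [apply: mulr_ge0; exact: w0 | exact: ab].
have E : \sum_(i < n) \sum_(j < n) w i * w j * ((a i - a j) * (b i - b j)) =
  ((\sum_(i < n) w i * a i * b i) * (\sum_(i < n) w i) +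
   (\sum_(i < n) w i) * (\sum_(i < n) w i * a i * b i)) -
  ((\sum_(i < n) w i * a i) * (\sum_(i < n) w i * b i) +
   (\sum_(i < n) w i * b i) * (\sum_(i < n) w i * a i)).
  rewrite !big_distrlr /= -!big_split /= -sumrB; apply: eq_bigr => i _.
  rewrite -!big_split /= -sumrB; apply: eq_bigr => j _; ring.
move: D0; rewrite E; set X := \sum_(i < n) w i * a i * b i.
set Y := \sum_(i < n) w i; set U := \sum_(i < n) w i * a i; set V := \sum_(i < n) w i * b i.
rewrite [X * Y]mulrC [V * U]mulrC => H; lra.
Qed.

Lemma noninc_prod (f g : nat -> R) : (forall i, f i.+1 <= f i) -> (forall i, g i.+1 <= g i) ->
  forall i j, 0 <= (f i - f j) * (g i - g j).
Proof.
move=> hf hg.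
have mono (h : nat -> R) : (forall i, h i.+1 <= h i) -> forall i j, (i <= j)%N -> h j <= h i.
  move=> hh i j ij; rewrite -(subnKC ij); elim: (j - i)%N => [|k IH]; first by rewrite addn0.
  by rewrite addnS; apply: le_trans (hh _) IH.
move=> i j; case: (leqP i j) => ij.
  by rewrite mulr_ge0 // subr_ge0; [apply: (mono f hf) | apply: (mono g hg)].
by rewrite mulr_le0 // subr_le0; [apply: (mono f hf) | apply: (mono g hg)]; exact: ltnW.
Qed.
End Cheb.

Section Tilde.
Variable R : realType.
Variable p : nat.
Hypothesis hp : (1 < p)%N.

Local Notation P := (p%:R : R).
Local Notation r := (p%:R : R)^-1.

Lemma P_gt0 : 0 < P. Proof. by rewrite ltr0n (ltnW hp). Qed.
Lemma P_neq0 : P != 0. Proof. by rewrite gt_eqF // P_gt0. Qed.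
Lemma Pr : P * r = 1. Proof. by rewrite mulfV // P_neq0. Qed.
Lemma rX_P i : r ^+ i * P ^+ i = 1.
Proof. by rewrite -exprMn mulrC Pr expr1n. Qed.
Lemma r_ge0 : 0 <= r. Proof. by rewrite invr_ge0 ltW // P_gt0. Qed.

Definition q n := (\sum_(i < n) p ^ i)%N.
Definition W n := \sum_(i < n) r ^+ i.
Definition geo m (c : R) i := if (i < m)%N then c * r ^+ i else 0.

Lemma qW n : W n.+1 * P ^+ n = (q n.+1)%:R.
Proof.
elim: n => [|n IH]; first by rewrite /W /q !big_ord1 expr0 expn0 mul1r.
rewrite /W big_ord_recl /= expr0 -/(W n.+1).
have -> : \sum_(i < n.+1) r ^+ (bump 0 i) = r * W n.+1.
  by rewrite /W mulr_sumr; apply: eq_bigr => i _; rewrite exprS.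
rewrite /q big_ord_recr /= -/(q n.+1) natrD -IH natrX exprS.
rewrite mulrDl mul1r addrC; congr (_ + _).
by rewrite (mulrC (p%:R^-1)) -mulrA (mulrA (p%:R^-1)) mulVf ?P_neq0 // mul1r.
Qed.

Lemma W_gt0 n : (0 < n)%N -> 0 < W n.
Proof.
case: n => // n _; rewrite /W big_ord_recl expr0.
rewrite ltr_pwDl // sumr_ge0 // => i _; rewrite exprn_ge0 // r_ge0.
Qed.

Lemma q_ge n : (n <= q n)%N.
Proof.
rewrite /q -[n in (n <= _)%N]card_ord -sum1_card; apply: leq_sum => i _.
by rewrite expn_gt0 (ltnW hp).
Qed.

Lemma rres_ge0 x (g : nat -> R) : real_resolution p x g -> forall i, 0 <= g i.
Proof. by move=> [h _] i; case: (h i) => [->//|H]; apply: le_trans H. Qed.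

Lemma rres_pow (g : nat -> R) : (forall i, P * g i.+1 <= g i) -> forall k, P ^+ k * g k <= g 0%N.
Proof.
move=> hg; elim=> [|k IH]; first by rewrite expr0 mul1r.
apply: le_trans IH; rewrite exprSr -mulrA ler_wpM2l // exprn_ge0 // ltW // P_gt0.
Qed.

Lemma rres_q (g : nat -> R) : (forall i, P * g i.+1 <= g i) -> (forall i, 0 <= g i) ->
  forall j, (q j.+1)%:R * g j <= \sum_(i < j.+1) g i.
Proof.
move=> hg g0 j; elim: j g hg g0 => [|j IH] g hg g0.
  by rewrite /q !big_ord1 expn0 mul1r.
rewrite big_ord_recl /=.
have := IH (fun i => g i.+1) (fun i => hg i.+1) (fun i => g0 i.+1) => /= H.
have H2 := rres_pow hg j.+1.
rewrite /q big_ord_recr /= -/(q j.+1) natrD natrX mulrDl.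
have -> : \sum_(i < j.+1) g (bump 0 i) = \sum_(i < j.+1) g i.+1 by [].
lra.
Qed.

Lemma rres_supp x (g : nat -> R) : real_resolution p x g -> forall j, g j != 0 -> (q j.+1 <= x)%N.
Proof.
move=> gr j gj; have [h1 [h2 he]] := gr.
have g1 : 1 <= g j by case: (h1 j) => // e; rewrite e eqxx in gj.
have := esum_partial j.+1 (rres_ge0 gr); rewrite he lee_fin => hs.
have := rres_q h2 (rres_ge0 gr) j => hq.
rewrite -(ler_nat R); apply: le_trans hs; apply: le_trans hq.
by rewrite ler_peMr // ler0n.
Qed.

Lemma geo_ge0 m c : 0 <= c -> forall i, 0 <= geo m c i.
Proof. by move=> c0 i; rewrite /geo; case: ifP => // _; rewrite mulr_ge0 // exprn_ge0 // r_ge0. Qed.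

Lemma tilde_struct x (g : nat -> R) : (0 < x)%N -> is_tilde_gamma p x g -> exists m c,
  [/\ (0 < m)%N, (forall j, (q j <= x)%N -> (j <= m)%N), c * W m = x%:R &
      forall i, g i = geo m c i].
Proof.
move=> x0 [gr gmin].
have q1 : q 1 = 1%N by rewrite /q big_ord1 expn0.
have exP : exists j, (q j <= x)%N by exists 1%N; rewrite q1.
have ubP : forall j, (q j <= x)%N -> (j <= x)%N by move=> j; apply: leq_trans (q_ge j).
case: (ex_maxnP exP ubP) => m qm maxm.
have m0 : (0 < m)%N by apply: maxm; rewrite q1.
have W0 := W_gt0 m0.
set c := x%:R / W m.
have cW : c * W m = x%:R by rewrite /c mulfVK // gt_eqF.
have cge : P ^+ m.-1 <= c.
  rewrite -(ler_pM2l W0) [W m * c]mulrC cW.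
  have := qW m.-1; rewrite prednK // => ->; by rewrite ler_nat.
have c0 : 0 <= c by apply: le_trans cge; rewrite exprn_ge0 // ltW // P_gt0.
have georr : real_resolution p x (geo m c).
  split; [|split].
  - move=> i; rewrite /geo; case: ifP => im; [right|by left].
    have e : P ^+ m.-1 = P ^+ (m.-1 - i) * P ^+ i.
      by rewrite -exprD subnK // -ltnS prednK.
    apply: le_trans (_ : P ^+ m.-1 * r ^+ i <= _); last first.
      by rewrite ler_wpM2r // exprn_ge0 // r_ge0.
    rewrite e -mulrA (mulrC (_ ^+ i)) rX_P mulr1; apply: exprn_ege1.
    by rewrite ler1n ltnW.
  - move=> i; rewrite /geo; case: ifP => im.
      by rewrite (ltnW im) exprS mulrCA (mulrA (p%:R)) Pr mul1r.
    by rewrite mulr0 geo_ge0.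
  - rewrite (@esum_fin R (geo m c) m) //; last first.
      by move=> i hi; rewrite /geo ltnNge hi.
      exact: geo_ge0.
    rewrite -cW /W mulr_sumr; congr (_%:E); apply: eq_bigr => i _.
    by rewrite /geo ltn_ord.
have g0c : g 0%N <= c.
  have := lex_le0 (gmin _ georr); rewrite /geo m0 expr0 mulr1 //.
have gsupp : forall i, (m <= i)%N -> g i = 0.
  move=> i hi; apply/eqP; apply/negP => /negP /(rres_supp gr) /maxm.
  by rewrite ltnNge hi.
have gle : forall i, g i <= c * r ^+ i.
  move=> i; have := rres_pow gr.2.1 i => h.
  have := ler_wpM2l (exprn_ge0 i r_ge0) (le_trans h g0c).
  by rewrite mulrA rX_P mul1r mulrC.
have gsum : \sum_(i < m) g i = x%:R.
  have := gr.2.2; rewrite (@esum_fin R g m) //; last exact: rres_ge0 gr.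
  by move=> /eqP; rewrite eqe => /eqP.
have hz : \sum_(i < m) (c * r ^+ i - g i) = 0.
  by rewrite sumrB gsum -mulr_sumr -/(W m) cW subrr.
have hge : forall i : 'I_m, true -> 0 <= c * r ^+ i - g i.
  by move=> i _; rewrite subr_ge0 gle.
have hz' := psumr_eq0P hge hz.
exists m, c; split => // i; rewrite /geo; case: ifP => im.
  by apply/eqP; rewrite eq_sym -subr_eq0; apply/eqP; exact: (hz' (Ordinal im)).
by apply: gsupp; rewrite leqNgt im.
Qed.

Lemma core m l c d (G H : nat -> nat) x y N :
  (m <= l)%N -> (0 < m)%N -> (forall i, p * G i.+1 <= G i)%N -> (forall i, p * H i.+1 <= H i)%N ->
  (forall i, (m <= i)%N -> G i = 0%N) -> (forall i, (l <= i)%N -> H i = 0%N) ->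
  (\sum_(i < m) G i)%N = x -> (\sum_(i < l) H i)%N = y ->
  c * W m = x%:R -> d * W l = y%:R -> (l <= N)%N ->
  \sum_(i < N) P ^+ i * geo m c i * geo l d i <=
  ((\sum_(i < N) p ^ i * G i * H i)%N)%:R.
Proof.
move=> ml m0 hG hH sG sH eG eH cW dW lN.
have mN : (m <= N)%N := leq_trans ml lN.
have l0 : (0 < l)%N := leq_trans m0 ml.
have Wm0 := W_gt0 m0; have Wl0 := W_gt0 l0.
set LHS := \sum_(i < N) _.
have eL : LHS = c * d * W m.
  rewrite /LHS (@big_trunc _ _ _ (fun i => P ^+ i * geo m c i * geo l d i) _ _ mN); last by move=> i hi /=; rewrite /geo ltnNge hi /= mulr0 mul0r.
  rewrite /W mulr_sumr; apply: eq_bigr => i _.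
  rewrite /geo ltn_ord (leq_trans (ltn_ord i) ml).
  have := rX_P i; rewrite mulrC => h.
  have -> : P ^+ i * (c * r ^+ i) * (d * r ^+ i) = (P ^+ i * r ^+ i) * (c * d * r ^+ i) by ring.
  by rewrite h mul1r.
have eLW : W l * LHS = x%:R * y%:R by rewrite eL -cW -dW; ring.
set U := fun i => P ^+ i * (G i)%:R.
set V := fun i => P ^+ i * (H i)%:R.
have decU : forall i, U i.+1 <= U i.
  move=> i; rewrite /U exprSr -mulrA ler_wpM2l ?exprn_ge0 ?ler0n //.
  by rewrite -natrM ler_nat hG.
have decV : forall i, V i.+1 <= V i.
  move=> i; rewrite /V exprSr -mulrA ler_wpM2l ?exprn_ge0 ?ler0n //.
  by rewrite -natrM ler_nat hH.
have eR : ((\sum_(i < N) p ^ i * G i * H i)%N)%:R = \sum_(i < m) r ^+ i * U i * V i.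
  rewrite natr_sum (@big_trunc _ _ _ (fun i => ((p ^ i * G i * H i)%N)%:R) _ _ mN); last by move=> i hi /=; rewrite sG // muln0 mul0n.
  apply: eq_bigr => i _; rewrite /U /V !natrM natrX.
  have := rX_P i => h.
  have -> : r ^+ i * (P ^+ i * (G i)%:R) * (P ^+ i * (H i)%:R) = (r ^+ i * P ^+ i) * (P ^+ i * (G i)%:R * (H i)%:R) by ring.
  by rewrite h mul1r.
have wU : forall n, \sum_(i < n) r ^+ i * U i = (\sum_(i < n) G i)%N%:R.
  by move=> n; rewrite natr_sum; apply: eq_bigr => i _; rewrite /U mulrA rX_P mul1r.
have wV : forall n, \sum_(i < n) r ^+ i * V i = (\sum_(i < n) H i)%N%:R.
  by move=> n; rewrite natr_sum; apply: eq_bigr => i _; rewrite /V mulrA rX_P mul1r.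
have C1 := cheb m (fun i => exprn_ge0 i r_ge0) (noninc_prod decU decV).
rewrite wU eG -/(W m) -eR in C1.
set Y := \sum_(i < m) r ^+ i * V i.
pose a i : R := if (i < m)%N then 1 else 0.
have deca : forall i, a i.+1 <= a i.
  by move=> i; rewrite /a; case: (ltnP i.+1 m) => h; rewrite ?(ltnW h) //; case: ifP.
have C2 := cheb l (fun i => exprn_ge0 i r_ge0) (noninc_prod deca decV).
have e1 : \sum_(i < l) r ^+ i * a i = W m.
  rewrite /W (@big_trunc _ _ _ (fun i => r ^+ i * a i) _ _ ml); last by move=> i hi /=; rewrite /a ltnNge hi /= mulr0.
  by apply: eq_bigr => i _; rewrite /a ltn_ord mulr1.
have e2 : \sum_(i < l) r ^+ i * a i * V i = Y.
  rewrite /Y (@big_trunc _ _ _ (fun i => r ^+ i * a i * V i) _ _ ml); last by move=> i hi /=; rewrite /a ltnNge hi /= mulr0 mul0r.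
  by apply: eq_bigr => i _; rewrite /a ltn_ord mulr1.
rewrite e1 e2 wV eH -/(W l) in C2.
rewrite eR -/(W m) in C1 *.
have x0 : 0 <= (x%:R : R) by rewrite ler0n.
have H3 : W m * (W l * LHS) <= W m * (W l * (\sum_(i < m) r ^+ i * U i * V i)).
  rewrite eLW; apply: le_trans (_ : x%:R * (W l * Y) <= _).
    by rewrite mulrCA ler_wpM2l.
  by rewrite mulrCA [W m * _]mulrCA ler_wpM2l // ltW.
by rewrite !(ler_pM2l Wm0, ler_pM2l Wl0) in H3.
Qed.
End Tilde.

Section Part2.
Variable R : realType.
Variable p : nat.
Hypothesis hp : (1 < p)%N.

Lemma rres_zero (g : nat -> R) : real_resolution p 0 g -> forall i, g i = 0.
Proof.
move=> gr i; have g0 := rres_ge0 gr.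
have := esum_partial i.+1 g0; rewrite gr.2.2 lee_fin big_ord_recr /= => h.
apply/eqP; rewrite eq_le g0 andbT; apply: le_trans h.
by rewrite lerDr sumr_ge0.
Qed.

Lemma ires_rres x (G : nat -> nat) : integral_resolution R p x G ->
  real_resolution p x (fun i => (G i)%:R : R).
Proof.
move=> [h1 h2]; split; [|split] => //.
- by move=> i; case: (G i) => [|n]; [left | right; rewrite ler1n].
- by move=> i; rewrite -natrM ler_nat.
Qed.

Lemma part2 x y (gta gtb : nat -> R) (G H : nat -> nat) :
  is_tilde_gamma p x gta -> is_tilde_gamma p y gtb ->
  integral_resolution R p x G -> integral_resolution R p y H ->
  (\esum_(i in [set: nat]) ((p%:R : R) ^+ i * gta i * gtb i)%:E
     <= \esum_(i in [set: nat]) ((((p ^ i) * G i * H i)%N)%:R : R)%:E)%E.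
Proof.
move=> ta tb iG iH.
have Rge0 : (0 <= \esum_(i in [set: nat]) ((((p ^ i) * G i * H i)%N)%:R : R)%:E)%E.
  by apply: esum_ge0 => i _; rewrite lee_fin ler0n.
case: x ta iG => [|x] ta iG.
  rewrite (@esum1 _ _ _ (fun i => ((p%:R : R) ^+ i * gta i * gtb i)%:E)) //.
  by move=> i _; rewrite (rres_zero ta.1) mulr0 mul0r.
case: y tb iH => [|y] tb iH.
  rewrite (@esum1 _ _ _ (fun i => ((p%:R : R) ^+ i * gta i * gtb i)%:E)) //.
  by move=> i _; rewrite (rres_zero tb.1) mulr0.
have [m [c [m0 maxm cW ga]]] := tilde_struct hp (ltn0Sn x) ta.
have [l [d [l0 maxl dW gb]]] := tilde_struct hp (ltn0Sn y) tb.
have supG : forall i, (m <= i)%N -> G i = 0%N.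
  move=> i hi; apply/eqP; apply/negP => /negP Gi.
  have : (G i)%:R != (0 : R) by rewrite pnatr_eq0.
  move/(rres_supp (ires_rres iG)) /maxm; by rewrite ltnNge hi.
have supH : forall i, (l <= i)%N -> H i = 0%N.
  move=> i hi; apply/eqP; apply/negP => /negP Hi.
  have : (H i)%:R != (0 : R) by rewrite pnatr_eq0.
  move/(rres_supp (ires_rres iH)) /maxl; by rewrite ltnNge hi.
have sG : (\sum_(i < m) G i)%N = x.+1.
  rewrite -(ires_fin hp iG (leq_maxr m (G 0%N))).
  by symmetry; apply: big_trunc; [exact: leq_maxl | exact: supG].
have sH : (\sum_(i < l) H i)%N = y.+1.
  rewrite -(ires_fin hp iH (leq_maxr l (H 0%N))).
  by symmetry; apply: big_trunc; [exact: leq_maxl | exact: supH].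
have c0 : 0 <= c by rewrite -(pmulr_lge0 _ (W_gt0 R p m0)) cW ler0n.
have d0 : 0 <= d by rewrite -(pmulr_lge0 _ (W_gt0 R p l0)) dW ler0n.
set N := (m + l)%N.
have L0 : forall i, 0 <= (p%:R : R) ^+ i * gta i * gtb i.
  by move=> i; rewrite ga gb !mulr_ge0 ?exprn_ge0 ?ler0n ?geo_ge0.
have Lz : forall i, (N <= i)%N -> (p%:R : R) ^+ i * gta i * gtb i = 0.
  by move=> i hi; rewrite ga /geo ltnNge (leq_trans (leq_addr _ _) hi) /= mulr0 mul0r.
have R0 : forall i, 0 <= ((((p ^ i) * G i * H i)%N)%:R : R) by move=> i; rewrite ler0n.
have Rz : forall i, (N <= i)%N -> ((((p ^ i) * G i * H i)%N)%:R : R) = 0.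
  by move=> i hi; rewrite supG ?muln0 ?mul0n // (leq_trans (leq_addr _ _) hi).
rewrite (@esum_fin R _ N L0 Lz) (@esum_fin R _ N R0 Rz).
rewrite lee_fin -natr_sum.
rewrite [X in X <= _](eq_bigr (fun i : 'I_N => (p%:R : R) ^+ i * geo p m c i * geo p l d i)); last by move=> i _; rewrite ga gb.
case: (leqP m l) => ml.
  exact: (core hp ml m0 iG.1 iH.1 supG supH sG sH cW dW (leq_addl _ _)).
have lm := ltnW ml.
have -> : (\sum_(i < N) p ^ i * G i * H i = \sum_(i < N) p ^ i * H i * G i)%N.
  by apply: eq_bigr => i _; rewrite mulnAC.
rewrite [X in X <= _](eq_bigr (fun i : 'I_N => (p%:R : R) ^+ i * geo p l d i * geo p m c i)); last by move=> i _; rewrite mulrAC.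
exact: (core hp lm l0 iH.1 iG.1 supH supG sH sG dW cW (leq_addr _ _)).
Qed.
End Part2.

Theorem mainTheorem6 (R : realType) (p : nat) (hp : (2 <= p)%N)
    (a b : vertex p -> nat) (wa wb : nat)
    (ha : integral_weight_function R a wa) (hb : integral_weight_function R b wb)
    (gha ghb : nat -> nat)
    (hgha : is_hat_gamma R p wa gha) (hghb : is_hat_gamma R p wb ghb)
    (gta gtb : nat -> R)
    (hgta : is_tilde_gamma p wa gta) (hgtb : is_tilde_gamma p wb gtb) :
  (\esum_(i in [set: nat]) ((((p ^ i) * gha i * ghb i)%N)%:R : R)%:E
     <= pairing R a b)%E /\
  (\esum_(i in [set: nat]) ((p%:R : R) ^+ i * gta i * gtb i)%:E
     <= \esum_(i in [set: nat]) ((((p ^ i) * gha i * ghb i)%N)%:R : R)%:E)%E.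
Proof.
split; first exact: (part1 hp ha hb hgha hghb).
exact: (@part2 R p hp wa wb gta gtb gha ghb hgta hgtb hgha.1 hghb.1).
Qed.
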